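(* Let $M,a,b,c$ be positive integers. The following are equivalent: (i) there is a three-link protocol solving MEQ-AD$(3,M)$ in which the ranges of $s_{AB},s_{AC},s_{BC}$ have sizes $a,b,c$ respectively (so its complexity is $\log_2(abc)$); (ii) there is a simple bipartite graph $G(U,V,E)$ with $|U|=a$, $|V|=b$, $|E|=M$ and no isolated vertices, together with a distance-2 edge coloring $W$ of $G$ using exactly $c$ colors. Moreover, when these hold, $ab\ge M$, $ac\ge M$ and $bc\ge M$.
   Context: Three nodes $A,B,C$ hold inputs $x_A,x_B,x_C\in\{1,\dots,M\}$. A three-link protocol is given by maps $s_{AB},s_{AC},s_{BC}$ from $\{1,\dots,M\}$ to finite sets: $A$ sends $s_{AB}(x_A)$ to $B$ and $s_{AC}(x_A)$ to $C$, and $B$ sends $s_{BC}(x_B)$ to $C$ over private point-to-point links. Each node outputs a bit: $EQ_A$ is a function of $x_A$, $EQ_B$ a function of $(x_B,s_{AB}(x_A))$, and $EQ_C$ a function of $(x_C,s_{AC}(x_A),s_{BC}(x_B))$. The protocol solves MEQ-AD$(3,M)$ if for all inputs, $EQ_A=EQ_B=EQ_C=0$ holds iff $x_A=x_B=x_C$. A distance-2 edge coloring of a graph assigns colors to edges so that any two distinct edges that share an endpoint, or are both adjacent to a common third edge, receive different colors. *)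

(* Defs.v *)
From mathcomp Require Import all_boot.
Set Implicit Arguments. Unset Strict Implicit. Unset Printing Implicit Defensive.

(* Inputs {1,...,M} are represented by 'I_M; output bit 0 is [false]. *)

Record protocol (M : nat) (TAB TAC TBC : finType) := Protocol {
  s_AB : 'I_M -> TAB;
  s_AC : 'I_M -> TAC;
  s_BC : 'I_M -> TBC;
  EQ_A : 'I_M -> bool;
  EQ_B : 'I_M -> TAB -> bool;
  EQ_C : 'I_M -> TAC -> TBC -> bool
}.

Definition solves_MEQ_AD3 M TAB TAC TBC (P : protocol M TAB TAC TBC) : Prop :=
  forall xA xB xC : 'I_M,
    (EQ_A P xA = false /\ EQ_B P xB (s_AB P xA) = false /\
     EQ_C P xC (s_AC P xA) (s_BC P xB) = false)
    <-> (xA = xB /\ xB = xC).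

Definition range_size M (T : finType) (f : 'I_M -> T) : nat := #|f @: [set: 'I_M]|.

Definition no_isolated (U V : finType) (E : {set U * V}) : Prop :=
  (forall u : U, exists v : V, (u, v) \in E) /\
  (forall v : V, exists u : U, (u, v) \in E).

Definition edge_adj (U V : finType) (e f : U * V) : bool :=
  (e != f) && ((e.1 == f.1) || (e.2 == f.2)).

Definition distance2_coloring (U V C : finType) (E : {set U * V}) (W : U * V -> C)
  : Prop :=
  forall e f, e \in E -> f \in E -> e != f ->
    (edge_adj e f \/ exists2 g, g \in E & edge_adj e g && edge_adj g f) ->
    W e != W f.

(* Main.v *)
Require Import Defs.
From mathcomp Require Import all_boot.

Lemma protoL1 {M TAB TAC TBC} {P : protocol M TAB TAC TBC} : solves_MEQ_AD3 P ->
  forall x y, s_AB P x = s_AB P y -> s_AC P x = s_AC P y -> x = y.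
Proof.
move=> H x y h1 h2.
have [hy _] := proj2 (H y y y) (conj erefl erefl).
have [_ [hx1 hx2]] := proj2 (H x x x) (conj erefl erefl).
have [] := proj1 (H y x x); last by move=> ->.
by rewrite hy -h1 -h2 hx1 hx2.
Qed.

Lemma protoL4 {M TAB TAC TBC} {P : protocol M TAB TAC TBC} : solves_MEQ_AD3 P ->
  forall x y z, s_AB P x = s_AB P y -> s_AC P y = s_AC P z -> s_BC P x = s_BC P z ->
  x = z.
Proof.
move=> H x y z h1 h2 h3.
have [hy _] := proj2 (H y y y) (conj erefl erefl).
have [_ [hx _]] := proj2 (H x x x) (conj erefl erefl).
have [_ [_ hz]] := proj2 (H z z z) (conj erefl erefl).
have [] := proj1 (H y x z); last by move=> _ ->.
by rewrite hy -h1 h2 h3 hx hz.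
Qed.

Lemma boundL M (T1 T2 : finType) (f : 'I_M -> T1) (g : 'I_M -> T2) :
  (forall x y, f x = f y -> g x = g y -> x = y) ->
  M <= #|f @: [set: 'I_M]| * #|g @: [set: 'I_M]|.
Proof.
move=> Hi; rewrite -cardsX.
have inj : injective (fun x => (f x, g x)) by move=> x y [] /Hi; apply.
have hc : #|(fun x => (f x, g x)) @: [set: 'I_M]| = M
  by rewrite card_imset // cardsT card_ord.
apply: leq_trans (_ : #|(fun x => (f x, g x)) @: [set: 'I_M]| <= _);
  first by rewrite hc.
apply: subset_leq_card; apply/subsetP => p /imsetP [x _ ->].
by rewrite in_setX !imset_f ?in_setT.
Qed.

Theorem theorem1 (M a b c : nat) (hM : 0 < M) (ha : 0 < a) (hb : 0 < b) (hc : 0 < c) :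
  let protocol_exists :=
    exists (TAB TAC TBC : finType) (P : protocol M TAB TAC TBC),
      solves_MEQ_AD3 P /\
      range_size (s_AB P) = a /\ range_size (s_AC P) = b /\ range_size (s_BC P) = c in
  let graph_exists :=
    exists (U V C : finType) (E : {set U * V}) (W : U * V -> C),
      #|U| = a /\ #|V| = b /\ #|E| = M /\ no_isolated E /\
      distance2_coloring E W /\ #|W @: E| = c in
  (protocol_exists <-> graph_exists) /\
  (protocol_exists -> M <= a * b /\ M <= a * c /\ M <= b * c).
Proof.
move=> pe ge; split; last first.
  move=> [TAB [TAC [TBC [P [H [<- [<- <-]]]]]]].
  rewrite /range_size; split; last split; apply: boundL.
  - exact: protoL1 H.
  - move=> x y h1 h2; exact: (protoL4 H x y y h1 erefl h2).
  - move=> x y h1 h2; exact: (protoL4 H x x y erefl h1 h2).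
split.
- move=> [TAB [TAC [TBC [P [H [hA [hB hC]]]]]]].
  set A := s_AB P @: [set: 'I_M] in hA.
  set B := s_AC P @: [set: 'I_M] in hB.
  pose U := {x : TAB | x \in A}.
  pose V := {x : TAC | x \in B}.
  pose su (x : 'I_M) : U := exist _ (s_AB P x) (imset_f (s_AB P) (in_setT x)).
  pose sv (x : 'I_M) : V := exist _ (s_AC P x) (imset_f (s_AC P) (in_setT x)).
  pose pr x := (su x, sv x).
  have prinj : injective pr.
    move=> x y /(congr1 (fun p : U * V => (val p.1, val p.2))) [] h1 h2.
    exact: (protoL1 H).
  pose x0 := Ordinal hM.
  pose W (e : U * V) := s_BC P (odflt x0 [pick x | pr x == e]).
  have Wk x : W (pr x) = s_BC P x.
    rewrite /W; case: pickP => [y /eqP /prinj -> //|/(_ x)]; by rewrite eqxx.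
  exists U, V, TBC, (pr @: [set: 'I_M]), W.
  split; first by rewrite card_sig -hA; apply: eq_card => u.
  split; first by rewrite card_sig -hB; apply: eq_card => u.
  split; first by rewrite card_imset // cardsT card_ord.
  split.
    split.
    + move=> [u hu]; have /imsetP [x _ hx] := hu.
      exists (sv x); apply/imsetP; exists x; rewrite ?in_setT //.
      rewrite /pr; congr pair; apply: val_inj => /=; by rewrite hx.
    + move=> [v hv]; have /imsetP [x _ hx] := hv.
      exists (su x); apply/imsetP; exists x; rewrite ?in_setT //.
      rewrite /pr; congr pair; apply: val_inj => /=; by rewrite hx.
  split; last first.
    rewrite -imset_comp -hC /range_size.
    by rewrite (@eq_imset _ _ (W \o pr) (s_BC P)).
  move=> e f /imsetP [x _ ->] /imsetP [z _ ->] nef Hadj.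
  rewrite !Wk; apply/eqP => h3.
  have h1 : su x = su z -> False.
    move=> E1; move/eqP: nef; apply; congr pr; apply: (protoL4 H x z z).
    + exact: (congr1 val E1).
    + by [].
    + exact: h3.
  have h2 : sv x = sv z -> False.
    move=> E1; move/eqP: nef; apply; congr pr; apply: (protoL4 H x x z).
    + by [].
    + exact: (congr1 val E1).
    + exact: h3.
  case: Hadj => [/andP [_ /orP [/eqP E1|/eqP E1]]|[g /imsetP [y _ ->]]].
  + exact: h1 E1.
  + exact: h2 E1.
  move=> /andP [/andP [_ /orP [/eqP E1|/eqP E1]] /andP [_ /orP [/eqP E2|/eqP E2]]].
  + by apply: h1; rewrite /= in E1 E2; rewrite E1 E2.
  + move/eqP: nef; apply; congr pr; apply: (protoL4 H x y z).
    * exact: (congr1 val E1).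
    * exact: (congr1 val E2).
    * exact: h3.
  + move/eqP: nef; apply; congr pr; symmetry; apply: (protoL4 H z y x).
    * exact: (congr1 val (esym E2)).
    * exact: (congr1 val (esym E1)).
    * exact: (esym h3).
  + by apply: h2; rewrite /= in E1 E2; rewrite E1 E2.
- move=> [U [V [C [E [W [hU [hV [hE [[hn1 hn2] [hd hW]]]]]]]]]].
  subst M.
  pose ed (i : 'I_#|E|) : U * V := enum_val i.
  have edE i : ed i \in E by exact: enum_valP.
  have edinj : injective ed by move=> i j; exact: enum_val_inj.
  have edsurj e : e \in E -> exists i, ed i = e.
    by move=> he; exists (enum_rank_in he e); rewrite /ed enum_rankK_in.
  exists U, V, C, (Protocol (fun i => (ed i).1) (fun i => (ed i).2)
      (fun i => W (ed i)) (fun _ => false) (fun xB u => (ed xB).1 != u)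
      (fun xC v w => ~~ (((ed xC).2 == v) && (W (ed xC) == w)))).
  split; last split; last split.
  + move=> xA xB xC /=; split; last by move=> [-> ->]; rewrite !eqxx.
    move=> [_ [/negbFE/eqP h1 /negbFE/andP [/eqP h2 /eqP h3]]].
    have ebc : ed xB = ed xC.
      case: (eqVneq (ed xB) (ed xC)) => // ne.
      have Hd := hd _ _ (edE xB) (edE xC) ne.
      suff /Hd : edge_adj (ed xB) (ed xC) \/ exists2 g, g \in E &
         edge_adj (ed xB) g && edge_adj g (ed xC) by rewrite h3 eqxx.
      case: (eqVneq (ed xA) (ed xB)) => [eab|nab].
        by left; rewrite /edge_adj ne /= -eab h2 eqxx orbT.
      case: (eqVneq (ed xA) (ed xC)) => [eac|nac].
        by left; rewrite /edge_adj ne /= -eac h1 eqxx.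
      right; exists (ed xA) => //.
      by rewrite /edge_adj (eq_sym (ed xB)) nab nac h1 h2 !eqxx /= orbT.
    have ebc' := edinj _ _ ebc; split => //.
    apply: edinj; rewrite [ed xA]surjective_pairing [ed xB]surjective_pairing.
    by rewrite -h1 -h2 ebc.
  + rewrite /range_size /= -hU -cardsT.
    suff -> : (fun i => (ed i).1) @: [set: 'I_#|E|] = [set: U] by [].
    apply/setP => u.
    rewrite in_setT; have [v huv] := hn1 u; have [i hi] := edsurj _ huv.
    by apply/imsetP; exists i; rewrite ?in_setT // hi.
  + rewrite /range_size /= -hV -cardsT.
    suff -> : (fun i => (ed i).2) @: [set: 'I_#|E|] = [set: V] by [].
    apply/setP => v.
    rewrite in_setT; have [u huv] := hn2 v; have [i hi] := edsurj _ huv.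
    by apply/imsetP; exists i; rewrite ?in_setT // hi.
  + rewrite /range_size /= -hW.
    suff -> : (fun i => W (ed i)) @: [set: 'I_#|E|] = W @: E by [].
    apply/setP => w.
    apply/imsetP/imsetP => [[i _ ->]|[e he ->]].
      by exists (ed i).
    by have [i hi] := edsurj _ he; exists i; rewrite ?in_setT // hi.
Qed.
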